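(* The affine scheme $\mathscr{H}_{\mathbb{A}}^{13}\cap\{p_{121}=p_{112}=p_{211}=0,\ p_{111}=1\}$ coincides with the cluster variety $X_{\mathsf{C}_2}$ under the identification of coordinates $u_1=\theta_{12}$, $u_2=\theta_{23}$, $u_3=\theta_{31}$, $(x_{11},x_{21})=(A_{12},\theta_3)$, $(x_{12},x_{22})=(A_{23},\theta_1)$, $(x_{13},x_{23})=(A_{31},\theta_2)$, $p_{212}=-A_1$, $p_{221}=-A_2$, $p_{122}=-A_3$, $p_{222}=\lambda$ (left-hand sides are coordinates of $\mathscr{H}_{\mathbb{A}}^{13}$, right-hand sides those of $X_{\mathsf{C}_2}$).
   Context: $\mathscr{H}_{\mathbb{A}}^{13}\subset\mathbb{A}^{17}$ (coordinates $u_1,u_2,u_3$, $x_{ij}$ with $i\in\{1,2\},j\in\{1,2,3\}$, $p_{abc}$ with $a,b,c\in\{1,2\}$) is defined by $-u_1\bm{x}_1+D^{(3)}\bm{x}_2=\bm{0}$, $-u_2\bm{x}_2+D^{(1)}\bm{x}_3=\bm{0}$, $-u_3\bm{x}_3-(D^{(2)})^{\dagger}\bm{x}_1=\bm{0}$, $u_2u_3+\det D^{(1)}=0$, $u_3u_1+\det D^{(2)}=0$, $u_1u_2+\det D^{(3)}=0$, where $\bm{x}_j=(x_{1j},x_{2j})^t$, $M^\dagger$ is the adjugate, $D^{(1)}_{ij}=p_{1ij}x_{21}-p_{2ij}x_{11}$, $D^{(2)}_{ij}=p_{i1j}x_{22}-p_{i2j}x_{12}$, $D^{(3)}_{ij}=p_{ij1}x_{23}-p_{ij2}x_{13}$,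 $D^{(k)}$ has rows $(-D^{(k)}_{12},D^{(k)}_{11})$, $(-D^{(k)}_{22},D^{(k)}_{21})$. The cluster variety of type $C_2$, $X_{\mathsf{C}_2}$, is the affine scheme in the $13$-dimensional affine space with coordinates $\theta_{12},\theta_{23},\theta_{31},\theta_1,\theta_2,\theta_3,A_{12},A_{23},A_{31},A_1,A_2,A_3,\lambda$ defined by the nine equations $\theta_i\theta_j=A_{ij}\theta_{ij}+A_{jk}A_kA_{ki}$, $\theta_{ki}\theta_{ij}=A_i\theta_i^2+\lambda A_{jk}\theta_i+A_jA_{jk}^2A_k$, $\theta_i\theta_{jk}=A_{ij}A_j\theta_j+\lambda A_{ki}A_{ij}+A_kA_{ki}\theta_k$ for $(i,j,k)\in\{(1,2,3),(2,3,1),(3,1,2)\}$ (indices of $A_{\bullet\bullet},\theta_{\bullet\bullet}$ read as $12,23,31$). *)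

(* Defs.v *)
From HB Require Import structures.
From mathcomp Require Import all_boot all_order all_algebra.
From mathcomp Require Import mpoly.
Set Implicit Arguments. Unset Strict Implicit. Unset Printing Implicit Defensive.
Import Order.TTheory GRing.Theory.
Local Open Scope ring_scope.

Definition in_ideal (T : comRingType) (s : seq T) (f : T) : Prop :=
  exists c : seq T, f = \sum_(i < size s) c`_i * s`_i.

Section Eqs.
Variable R : comRingType.

Local Notation P17 := {mpoly R[17]}.
Definition v17 (k : nat) : P17 := 'X_(inord k).
Definition u1 := v17 0. Definition u2 := v17 1. Definition u3 := v17 2.
Definition x11 := v17 3. Definition x21 := v17 4.
Definition x12 := v17 5. Definition x22 := v17 6.
Definition x13 := v17 7. Definition x23 := v17 8.
Definition p111 := v17 9.  Definition p112 := v17 10.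
Definition p121 := v17 11. Definition p122 := v17 12.
Definition p211 := v17 13. Definition p212 := v17 14.
Definition p221 := v17 15. Definition p222 := v17 16.

Definition pp (a b c : nat) : P17 :=
  match a, b, c with
  | 1, 1, 1 => p111 | 1, 1, _ => p112 | 1, _, 1 => p121 | 1, _, _ => p122
  | _, 1, 1 => p211 | _, 1, _ => p212 | _, _, 1 => p221 | _, _, _ => p222
  end.

Definition D1 (i j : nat) : P17 := pp 1 i j * x21 - pp 2 i j * x11.
Definition D2 (i j : nat) : P17 := pp i 1 j * x22 - pp i 2 j * x12.
Definition D3 (i j : nat) : P17 := pp i j 1 * x23 - pp i j 2 * x13.

(* The 2x2 matrix D^{(k)} with rows (-D_12, D_11), (-D_22, D_21),
   stored as its four entries (m11, m12, m21, m22). *)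
Definition mat (D : nat -> nat -> P17) : P17 * P17 * P17 * P17 :=
  (- D 1 2, D 1 1, - D 2 2, D 2 1).
Definition mdet (m : P17 * P17 * P17 * P17) : P17 :=
  let: (a, b, c, d) := m in a * d - b * c.
Definition mapp (m : P17 * P17 * P17 * P17) (v1 v2 : P17) : P17 * P17 :=
  let: (a, b, c, d) := m in (a * v1 + b * v2, c * v1 + d * v2).
Definition madj (m : P17 * P17 * P17 * P17) : P17 * P17 * P17 * P17 :=
  let: (a, b, c, d) := m in (d, - b, - c, a).

Definition H_eqs : seq P17 :=
  let e1 := mapp (mat D3) x12 x22 in
  let e2 := mapp (mat D1) x13 x23 in
  let e3 := mapp (madj (mat D2)) x11 x21 in
  [:: - u1 * x11 + e1.1; - u1 * x21 + e1.2;
      - u2 * x12 + e2.1; - u2 * x22 + e2.2;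
      - u3 * x13 - e3.1; - u3 * x23 - e3.2;
      u2 * u3 + mdet (mat D1);
      u3 * u1 + mdet (mat D2);
      u1 * u2 + mdet (mat D3)].

Definition slice_eqs : seq P17 := [:: p121; p112; p211; p111 - 1].

Local Notation P13 := {mpoly R[13]}.
Definition v13 (k : nat) : P13 := 'X_(inord k).
Definition th12 := v13 0. Definition th23 := v13 1. Definition th31 := v13 2.
Definition th1 := v13 3.  Definition th2 := v13 4.  Definition th3 := v13 5.
Definition A12 := v13 6.  Definition A23 := v13 7.  Definition A31 := v13 8.
Definition A1 := v13 9.   Definition A2 := v13 10.  Definition A3 := v13 11.
Definition lam := v13 12.

Definition C2_triple (ti tj tk tij tjk tki ai aj ak aij ajk aki : P13)
  : seq P13 :=
  [:: ti * tj - (aij * tij + ajk * ak * aki);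
      tki * tij - (ai * ti ^+ 2 + lam * ajk * ti + aj * ajk ^+ 2 * ak);
      ti * tjk - (aij * aj * tj + lam * aki * aij + ak * aki * tk)].

Definition XC2_eqs : seq P13 :=
  C2_triple th1 th2 th3 th12 th23 th31 A1 A2 A3 A12 A23 A31 ++
  C2_triple th2 th3 th1 th23 th31 th12 A2 A3 A1 A23 A31 A12 ++
  C2_triple th3 th1 th2 th31 th12 th23 A3 A1 A2 A31 A12 A23.

(* ---------- The identification, as the ring map k[A^17] -> k[A^13] ----
   corresponding to the closed embedding A^13 -> A^17 onto the slice. *)
Definition ident_img (i : 'I_17) : P13 :=
  match val i with
  | 0 => th12 | 1 => th23 | 2 => th31
  | 3 => A12 (* x11 *) | 4 => th3 (* x21 *)
  | 5 => A23 (* x12 *) | 6 => th1 (* x22 *)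
  | 7 => A31 (* x13 *) | 8 => th2 (* x23 *)
  | 9 => 1 (* p111 *) | 10 => 0 (* p112 *) | 11 => 0 (* p121 *)
  | 12 => - A3 (* p122 *) | 13 => 0 (* p211 *) | 14 => - A1 (* p212 *)
  | 15 => - A2 (* p221 *) | _ => lam (* p222 *)
  end.

Definition ident (f : P17) : P13 := f \mPo [tuple ident_img i | i < 17].

End Eqs.

(* Main.v *)
Require Import Defs.
From HB Require Import structures.
From mathcomp Require Import all_boot all_order all_algebra.
From mathcomp Require Import mpoly.
From mathcomp Require Import ring.
Set Implicit Arguments. Unset Strict Implicit. Unset Printing Implicit Defensive.
Import GRing.Theory.
Local Open Scope ring_scope.

Section Ideal.
Variable T : comRingType.
Implicit Types (s : seq T) (f g : T).

Lemma idl0 s : in_ideal s 0.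
Proof. exists [::]; rewrite big1 // => i _; by rewrite nth_nil mul0r. Qed.

Lemma idlD s f g : in_ideal s f -> in_ideal s g -> in_ideal s (f + g).
Proof.
move=> [c1 ->] [c2 ->]; exists (mkseq (fun i => c1`_i + c2`_i) (size s)).
rewrite -big_split /=; apply: eq_bigr => i _; by rewrite nth_mkseq // mulrDl.
Qed.

Lemma idlM s a f : in_ideal s f -> in_ideal s (a * f).
Proof.
move=> [c1 ->]; exists (mkseq (fun i => a * c1`_i) (size s)).
rewrite mulr_sumr; apply: eq_bigr => i _; by rewrite nth_mkseq // mulrA.
Qed.

Lemma idlN s f : in_ideal s f -> in_ideal s (- f).
Proof. by move=> h; rewrite -mulN1r; apply: idlM. Qed.

Lemma idlB s f g : in_ideal s f -> in_ideal s g -> in_ideal s (f - g).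
Proof. by move=> h1 h2; apply: idlD => //; apply: idlN. Qed.

Lemma idl_gen s j : (j < size s)%N -> in_ideal s s`_j.
Proof.
move=> hj; exists (mkseq (fun i => (i == j)%:R) (size s)).
rewrite (bigD1 (Ordinal hj)) //= nth_mkseq // eqxx mul1r big1 ?addr0 //.
move=> i /eqP hi; rewrite nth_mkseq //.
have -> : (nat_of_ord i == j) = false.
  by apply/negbTE/eqP => e; apply: hi; apply: val_inj.
by rewrite mul0r.
Qed.

Lemma idl_span s t f : in_ideal s f -> (forall i, (i < size s)%N -> in_ideal t s`_i) ->
  in_ideal t f.
Proof.
move=> [c ->] h; apply: (big_ind (in_ideal t)) => //.
- exact: idl0.
- exact: idlD.
- by move=> i _; apply: idlM; apply: h.
Qed.

Lemma idl_cat_l s s' f : in_ideal s f -> in_ideal (s ++ s') f.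
Proof.
move=> hf; apply: (idl_span hf) => i hi.
have -> : s`_i = (s ++ s')`_i by rewrite nth_cat hi.
by apply: idl_gen; rewrite size_cat ltn_addr.
Qed.

Lemma idl_cat_r s s' f : in_ideal s' f -> in_ideal (s ++ s') f.
Proof.
move=> hf; apply: (idl_span hf) => i hi.
have -> : s'`_i = (s ++ s')`_(size s + i) by rewrite nth_cat ltnNge leq_addr /= addKn.
by apply: idl_gen; rewrite size_cat ltn_add2l.
Qed.

End Ideal.

Lemma idl_morph (T U : comRingType) (phi : {rmorphism T -> U}) s t f :
  in_ideal s f -> (forall i, (i < size s)%N -> in_ideal t (phi s`_i)) -> in_ideal t (phi f).
Proof.
move=> [c ->] h; rewrite rmorph_sum; apply: (big_ind (in_ideal t)) => //.
- exact: idl0.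
- exact: idlD.
- by move=> i _; rewrite rmorphM; apply: idlM; apply: h.
Qed.
Section Main.
Variable R : comRingType.
Local Notation P17 := {mpoly R[17]}.
Local Notation P13 := {mpoly R[13]}.

Definition t17 := [tuple ident_img R i | i < 17].

Definition psi_img (i : 'I_13) : P17 :=
  match val i with
  | 0 => u1 R | 1 => u2 R | 2 => u3 R
  | 3 => x22 R | 4 => x23 R | 5 => x21 R
  | 6 => x11 R | 7 => x12 R | 8 => x13 R
  | 9 => - p212 R | 10 => - p221 R | 11 => - p122 R
  | _ => p222 R
  end.
Definition t13 := [tuple psi_img i | i < 13].

Lemma identE f : ident f = f \mPo t17. Proof. by []. Qed.

Lemma compX17 k : (k < 17)%N -> v17 R k \mPo t17 = ident_img R (inord k).
Proof. by move=> hk; rewrite /v17 comp_mpolyXU -tnth_nth tnth_mktuple. Qed.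
Lemma compX13 k : (k < 13)%N -> v13 R k \mPo t13 = psi_img (inord k).
Proof. by move=> hk; rewrite /v13 comp_mpolyXU -tnth_nth tnth_mktuple. Qed.

Ltac iv := rewrite compX17 // /ident_img /= inordK.
Lemma i_u1 : u1 R \mPo t17 = th12 R. Proof. by iv. Qed.
Lemma i_u2 : u2 R \mPo t17 = th23 R. Proof. by iv. Qed.
Lemma i_u3 : u3 R \mPo t17 = th31 R. Proof. by iv. Qed.
Lemma i_x11 : x11 R \mPo t17 = A12 R. Proof. by iv. Qed.
Lemma i_x21 : x21 R \mPo t17 = th3 R. Proof. by iv. Qed.
Lemma i_x12 : x12 R \mPo t17 = A23 R. Proof. by iv. Qed.
Lemma i_x22 : x22 R \mPo t17 = th1 R. Proof. by iv. Qed.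
Lemma i_x13 : x13 R \mPo t17 = A31 R. Proof. by iv. Qed.
Lemma i_x23 : x23 R \mPo t17 = th2 R. Proof. by iv. Qed.
Lemma i_p111 : p111 R \mPo t17 = 1. Proof. by iv. Qed.
Lemma i_p112 : p112 R \mPo t17 = 0. Proof. by iv. Qed.
Lemma i_p121 : p121 R \mPo t17 = 0. Proof. by iv. Qed.
Lemma i_p122 : p122 R \mPo t17 = - A3 R. Proof. by iv. Qed.
Lemma i_p211 : p211 R \mPo t17 = 0. Proof. by iv. Qed.
Lemma i_p212 : p212 R \mPo t17 = - A1 R. Proof. by iv. Qed.
Lemma i_p221 : p221 R \mPo t17 = - A2 R. Proof. by iv. Qed.
Lemma i_p222 : p222 R \mPo t17 = lam R. Proof. by iv. Qed.

Definition ivars := (i_u1, i_u2, i_u3, i_x11, i_x21, i_x12, i_x22, i_x13, i_x23,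
  i_p111, i_p112, i_p121, i_p122, i_p211, i_p212, i_p221, i_p222).

Lemma H0 : ident (H_eqs R)`_0 = (XC2_eqs R)`_0.
Proof.
rewrite identE /H_eqs /mat /D1 /D2 /D3 /mapp /madj /mdet /=.
rewrite !(rmorphD, rmorphB, rmorphN, rmorphM) /= !ivars.
ring.
Qed.

Lemma H1 : ident (H_eqs R)`_1 = - (XC2_eqs R)`_8.
Proof.
rewrite identE /H_eqs /mat /D1 /D2 /D3 /mapp /madj /mdet /=.
rewrite !(rmorphD, rmorphB, rmorphN, rmorphM) /= !ivars.
ring.
Qed.

Lemma H2 : ident (H_eqs R)`_2 = (XC2_eqs R)`_3.
Proof.
rewrite identE /H_eqs /mat /D1 /D2 /D3 /mapp /madj /mdet /=.
rewrite !(rmorphD, rmorphB, rmorphN, rmorphM) /= !ivars.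
ring.
Qed.

Lemma H3 : ident (H_eqs R)`_3 = - (XC2_eqs R)`_2.
Proof.
rewrite identE /H_eqs /mat /D1 /D2 /D3 /mapp /madj /mdet /=.
rewrite !(rmorphD, rmorphB, rmorphN, rmorphM) /= !ivars.
ring.
Qed.

Lemma H4 : ident (H_eqs R)`_4 = (XC2_eqs R)`_6.
Proof.
rewrite identE /H_eqs /mat /D1 /D2 /D3 /mapp /madj /mdet /=.
rewrite !(rmorphD, rmorphB, rmorphN, rmorphM) /= !ivars.
ring.
Qed.

Lemma H5 : ident (H_eqs R)`_5 = - (XC2_eqs R)`_5.
Proof.
rewrite identE /H_eqs /mat /D1 /D2 /D3 /mapp /madj /mdet /=.
rewrite !(rmorphD, rmorphB, rmorphN, rmorphM) /= !ivars.
ring.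
Qed.

Lemma H6 : ident (H_eqs R)`_6 = (XC2_eqs R)`_7.
Proof.
rewrite identE /H_eqs /mat /D1 /D2 /D3 /mapp /madj /mdet /=.
rewrite !(rmorphD, rmorphB, rmorphN, rmorphM) /= !ivars.
ring.
Qed.

Lemma H7 : ident (H_eqs R)`_7 = (XC2_eqs R)`_1.
Proof.
rewrite identE /H_eqs /mat /D1 /D2 /D3 /mapp /madj /mdet /=.
rewrite !(rmorphD, rmorphB, rmorphN, rmorphM) /= !ivars.
ring.
Qed.

Lemma H8 : ident (H_eqs R)`_8 = (XC2_eqs R)`_4.
Proof.
rewrite identE /H_eqs /mat /D1 /D2 /D3 /mapp /madj /mdet /=.
rewrite !(rmorphD, rmorphB, rmorphN, rmorphM) /= !ivars.
ring.
Qed.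


Definition sig (f : P17) : P17 := ident f \mPo t13.

Lemma sig0 : sig 0 = 0. Proof. by rewrite /sig identE !rmorph0. Qed.
Lemma sig1 : sig 1 = 1. Proof. by rewrite /sig identE !rmorph1. Qed.
Lemma sigD x y : sig (x + y) = sig x + sig y.
Proof. by rewrite /sig identE !rmorphD. Qed.
Lemma sigM x y : sig (x * y) = sig x * sig y.
Proof. by rewrite /sig identE !rmorphM. Qed.
Lemma sigZ c x : sig (c *: x) = c *: sig x.
Proof. by rewrite /sig identE !comp_mpolyZ. Qed.

Local Notation S := (slice_eqs R).
Local Notation K := (fun g => in_ideal S (g - sig g)).

Lemma K_var k : (k < 17)%N -> K (v17 R k).
Proof.
rewrite /sig identE.
do 17 try (case: k => [|k]); try by [].
all: move=> _; rewrite compX17 // /ident_img /= inordK //.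
all: rewrite ?rmorphN ?rmorph0 ?rmorph1 /=.
all: rewrite /th12 /th23 /th31 /th1 /th2 /th3 /A12 /A23 /A31 /A1 /A2 /A3 /lam.
all: rewrite ?compX13 // /psi_img /= ?inordK //.
all: rewrite ?opprK ?subr0.
all: try (rewrite subrr; exact: idl0).
- exact: (@idl_gen _ S 3 isT).
- exact: (@idl_gen _ S 1 isT).
- exact: (@idl_gen _ S 0 isT).
- exact: (@idl_gen _ S 2 isT).
Qed.

Lemma K_mul x y : K x -> K y -> K (x * y).
Proof.
move=> /= hx hy; rewrite sigM.
have -> : x * y - sig x * sig y = x * (y - sig y) + sig y * (x - sig x) by ring.
by apply: idlD; apply: idlM.
Qed.

Lemma K_all f : K f.
Proof.
rewrite (mpolyE f).
apply: (big_ind K).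
- by rewrite /= sig0 subr0; apply: idl0.
- move=> x y /= hx hy; rewrite sigD opprD addrACA; exact: idlD.
move=> m _ /=; rewrite sigZ -scalerBr -mul_mpolyC; apply: idlM.
rewrite mpolyXE_id; apply: (big_ind K).
- by rewrite /= sig1 subrr; apply: idl0.
- exact: K_mul.
move=> i _; elim: (m i) => [|e IH].
- by rewrite /= expr0 sig1 subrr; apply: idl0.
rewrite exprS; apply: K_mul => //.
have -> : 'X_i = v17 R i by rewrite /v17 inord_val.
exact: K_var.
Qed.


End Main.
Lemma sigH (R : comRingType) k : (k < 9)%N -> in_ideal (H_eqs R ++ slice_eqs R) (sig (H_eqs R)`_k).
Proof.
move=> hk.
have -> : sig (H_eqs R)`_k = (H_eqs R)`_k - ((H_eqs R)`_k - sig (H_eqs R)`_k) by rewrite opprB addrC subrK.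
apply: idlB; first by apply: idl_cat_l; apply: idl_gen.
by apply: idl_cat_r; apply: K_all.
Qed.

Theorem proposition7p2 (R : comRingType) (f : {mpoly R[17]}) :
  in_ideal (H_eqs R ++ slice_eqs R) f <-> in_ideal (XC2_eqs R) (ident f).
Proof.
split.
{ move=> hf; rewrite identE; apply: (@idl_morph _ _ (comp_mpoly (t17 R) : {rmorphism _ -> _}) _ _ f hf) => i hi.
  rewrite /= -identE.
  do 18 try (case: i hi => [|i] hi); try by [].
  + by rewrite H0; apply: idl_gen.
  + by rewrite H1; apply: idlN; apply: idl_gen.
  + by rewrite H2; apply: idl_gen.
  + by rewrite H3; apply: idlN; apply: idl_gen.
  + by rewrite H4; apply: idl_gen.
  + by rewrite H5; apply: idlN; apply: idl_gen.
  + by rewrite H6; apply: idl_gen.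
  + by rewrite H7; apply: idl_gen.
  + by rewrite H8; apply: idl_gen.
  all: rewrite /= identE /= ?i_p121 ?i_p112 ?i_p211 ?rmorphB /= ?i_p111 ?rmorph1 ?subrr; exact: idl0.
}
- move=> h.
  have hs : in_ideal (H_eqs R ++ slice_eqs R) (sig f).
    rewrite /sig; apply: (@idl_morph _ _ (comp_mpoly (t13 R) : {rmorphism _ -> _}) _ _ _ h) => j hj.
    do 9 try (case: j hj => [|j] hj); try by [].
    + by rewrite -H0; apply: sigH.
    + by rewrite -H7; apply: sigH.
    + by rewrite -[_`_2]opprK -H3 rmorphN; apply: idlN; apply: sigH.
    + by rewrite -H2; apply: sigH.
    + by rewrite -H8; apply: sigH.
    + by rewrite -[_`_5]opprK -H5 rmorphN; apply: idlN; apply: sigH.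
    + by rewrite -H4; apply: sigH.
    + by rewrite -H6; apply: sigH.
    + by rewrite -[_`_8]opprK -H1 rmorphN; apply: idlN; apply: sigH.
  rewrite -(subrK (sig f) f); apply: idlD => //.
  by apply: idl_cat_r; apply: K_all.
Qed.
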